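(* Let $L$ be a finite-dimensional solvable Lie algebra over an arbitrary field $F$ and let $U$ be a proper subalgebra of $L$. Then the following are equivalent: (i) $U$ is modular in $L$; (ii) $U$ is semi-modular in $L$; (iii) $U$ is a quasi-ideal of $L$.
   Context: For subalgebras $U,B$ of a Lie algebra $L$, $\langle U,B\rangle$ denotes the subalgebra generated by $U\cup B$. A subalgebra $B$ covers a subalgebra $A$ if $A$ is a maximal subalgebra of $B$. A subalgebra $U$ of $L$ is modular in $L$ if $\langle U,B\rangle\cap C=\langle B,U\cap C\rangle$ for all subalgebras $B\subseteq C$ of $L$, and $\langle U,B\rangle\cap C=\langle B\cap C,U\rangle$ for all subalgebras $B,C$ of $L$ with $U\subseteq C$. $U$ is upper modular (um) in $L$ if whenever $B$ is a subalgebra of $L$ which covers $U\cap B$, then $\langle U,B\rangle$ covers $U$; $U$ is lower modular (lm) in $L$ if whenever $B$ is a subalgebra of $L$ such that $\langle U,B\rangle$ covers $U$, then $B$ covers $U\cap B$; $U$ is semi-modular (sm) in $L$ if it is both um and lm in $L$. A subalgebra $Q$ of $L$ is a quasi-ideal of $L$ if $[Q,V]\subseteq Q+V$ for every subspace $V$ of $L$. *)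

(* Defs.v *)
From HB Require Import structures.
From mathcomp Require Import all_boot all_order all_algebra.
Set Implicit Arguments. Unset Strict Implicit. Unset Printing Implicit Defensive.
Import GRing.Theory.
Local Open Scope ring_scope.


Section Lie.
Variables (F : fieldType) (L : vectType F) (br : L -> L -> L).

Definition is_lie_bracket : Prop :=
  [/\ forall (a : F) (x y z : L), br (a *: x + y) z = a *: br x z + br y z,
      forall (a : F) (x y z : L), br z (a *: x + y) = a *: br z x + br z y,
      forall x : L, br x x = 0
    & forall x y z : L, br x (br y z) + br y (br z x) + br z (br x y) = 0].

(* [A, B] : the subspace spanned by all brackets [a, b], a in A, b in B
   (spanned by the brackets of basis vectors, by bilinearity). *)
Definition lie_prod (A B : {vspace L}) : {vspace L} :=
  <<[seq br x y | x <- vbasis A, y <- vbasis B]>>%VS.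

Definition is_subalg (A : {vspace L}) : Prop :=
  forall x y, x \in A -> y \in A -> br x y \in A.

Fixpoint derived (n : nat) : {vspace L} :=
  if n is m.+1 then lie_prod (derived m) (derived m) else fullv%VS.

Definition lie_solvable : Prop := exists n, derived n = 0%VS.

(* Subalgebra generated by a subspace S: iterate S |-> S + [S, S];
   this stabilises after at most dim L steps at the smallest subalgebra
   containing S. *)
Definition gen_step (S : {vspace L}) : {vspace L} := (S + lie_prod S S)%VS.
Definition gen_subalg (S : {vspace L}) : {vspace L} :=
  iter (\dim (fullv%VS : {vspace L})) gen_step S.

Definition gen2 (U B : {vspace L}) : {vspace L} := gen_subalg (U + B)%VS.

(* A is a maximal subalgebra of B (equivalently, B covers A). *)
Definition covers (B A : {vspace L}) : Prop :=
  [/\ is_subalg B, is_subalg A, (A <= B)%VS, A != B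
    & forall C : {vspace L}, is_subalg C -> (A <= C)%VS -> (C <= B)%VS ->
        C = A \/ C = B].

Definition modular (U : {vspace L}) : Prop :=
  (forall B C : {vspace L}, is_subalg B -> is_subalg C -> (B <= C)%VS ->
     (gen2 U B :&: C)%VS = gen2 B (U :&: C)%VS) /\
  (forall B C : {vspace L}, is_subalg B -> is_subalg C -> (U <= C)%VS ->
     (gen2 U B :&: C)%VS = gen2 (B :&: C)%VS U).

Definition upper_modular (U : {vspace L}) : Prop :=
  forall B : {vspace L}, is_subalg B -> covers B (U :&: B)%VS ->
    covers (gen2 U B) U.

Definition lower_modular (U : {vspace L}) : Prop :=
  forall B : {vspace L}, is_subalg B -> covers (gen2 U B) U ->
    covers B (U :&: B)%VS.

Definition semi_modular (U : {vspace L}) : Prop :=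
  upper_modular U /\ lower_modular U.

Definition quasi_ideal (Q : {vspace L}) : Prop :=
  is_subalg Q /\ forall V : {vspace L}, (lie_prod Q V <= Q + V)%VS.

End Lie.

(* Main.v *)
Require Import Defs.
From HB Require Import structures.
From mathcomp Require Import all_boot all_order all_algebra.
Set Implicit Arguments. Unset Strict Implicit. Unset Printing Implicit Defensive.
Import GRing.Theory.
Local Open Scope ring_scope.

Lemma lin0 (F : fieldType) (L : vectType F) (f : L -> L) :
  (forall a x y, f (a *: x + y) = a *: f x + f y) -> f 0 = 0.
Proof.
move=> Hf; have := Hf 1 0 0; rewrite scaler0 add0r scale1r => H.
by apply: (@addrI _ (f 0)); rewrite addr0 -H.
Qed.

Lemma lin_span (F : fieldType) (L : vectType F) (f : L -> L) (P : {vspace L}) (X : seq L) d :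
  (forall a x y, f (a *: x + y) = a *: f x + f y) ->
  (forall x, x \in X -> f x \in P) -> d \in <<X>>%VS -> f d \in P.
Proof.
move=> Hf HX Hd; rewrite (coord_span (X:=in_tuple X) Hd).
elim/big_rec: _ => [|i v _ Hv]; first by rewrite (lin0 Hf) mem0v.
rewrite Hf memvD // memvZ // HX // mem_nth // size_tuple; by case: i.
Qed.

Section Br.
Variables (F : fieldType) (L : vectType F) (br : L -> L -> L).
Hypothesis Hlie : is_lie_bracket br.

Lemma brlin_l z : forall a x y, br (a *: x + y) z = a *: br x z + br y z.
Proof. by case: Hlie => H _ _ _ a x y; rewrite H. Qed.
Lemma brlin_r z : forall a x y, br z (a *: x + y) = a *: br z x + br z y.
Proof. by case: Hlie => _ H _ _ a x y; rewrite H. Qed.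
Lemma brDl x y z : br (x + y) z = br x z + br y z.
Proof. by have := brlin_l z 1 x y; rewrite !scale1r. Qed.
Lemma brDr x y z : br z (x + y) = br z x + br z y.
Proof. by have := brlin_r z 1 x y; rewrite !scale1r. Qed.
Lemma brZl a x z : br (a *: x) z = a *: br x z.
Proof. by have := brlin_l z a x 0; rewrite addr0 (lin0 (brlin_l z)) addr0. Qed.
Lemma brN x y : br y x = - br x y.
Proof.
case: Hlie => _ _ Ha _; have := Ha (x + y).
rewrite brDl !brDr !Ha add0r addr0 => /eqP; rewrite addr_eq0 => /eqP ->.
by rewrite opprK.
Qed.
Lemma brJ x y z : br x (br y z) = - br y (br z x) - br z (br x y).
Proof.
case: Hlie => _ _ _ J; apply/eqP; rewrite -subr_eq0 opprB opprK.
by rewrite [br z _ + _]addrC addrA J.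
Qed.


Lemma mem_lie_prod (A B : {vspace L}) x y :
  x \in A -> y \in B -> br x y \in lie_prod br A B.
Proof.
move=> Hx Hy.
have Hx' : x \in <<vbasis A>>%VS by rewrite (span_basis (vbasisP A)).
have Hy' : y \in <<vbasis B>>%VS by rewrite (span_basis (vbasisP B)).
apply: (lin_span (f := fun v => br v y) (brlin_l y)) Hx' => a Ha.
apply: (lin_span (f := br a) (brlin_r a)) Hy' => b Hb.
by apply: memv_span; apply/allpairsP; exists (a, b).
Qed.

Lemma lie_prodP (A B P : {vspace L}) :
  (forall x y, x \in A -> y \in B -> br x y \in P) -> (lie_prod br A B <= P)%VS.
Proof.
move=> H; apply/span_subvP => z /allpairsP [[a b] /= [Ha Hb ->]].
by apply: H; apply: vbasis_mem.
Qed.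

Lemma lie_prodS (A B A' B' : {vspace L}) :
  (A <= A')%VS -> (B <= B')%VS -> (lie_prod br A B <= lie_prod br A' B')%VS.
Proof.
move=> /subvP HA /subvP HB; apply: lie_prodP => x y Hx Hy.
by apply: mem_lie_prod; [apply: HA | apply: HB].
Qed.

Lemma subalgP (A : {vspace L}) : is_subalg br A <-> (lie_prod br A A <= A)%VS.
Proof.
split; first by move=> H; apply: lie_prodP.
by move=> /subvP H x y Hx Hy; apply: H; apply: mem_lie_prod.
Qed.

Lemma subalg_cap (A B : {vspace L}) :
  is_subalg br A -> is_subalg br B -> is_subalg br (A :&: B)%VS.
Proof.
move=> HA HB x y; rewrite !memv_cap => /andP [Hx1 Hx2] /andP [Hy1 Hy2].
by rewrite HA ?HB.
Qed.

Lemma subalg_sum (A B : {vspace L}) :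
  is_subalg br A -> is_subalg br B ->
  (forall a b, a \in A -> b \in B -> br a b \in (A + B)%VS) ->
  is_subalg br (A + B)%VS.
Proof.
move=> HA HB H x y /memv_addP [a Ha [b Hb ->]] /memv_addP [a' Ha' [b' Hb' ->]].
rewrite !brDl !brDr.
have HAs : (A <= A + B)%VS by apply: addvSl.
have HBs : (B <= A + B)%VS by apply: addvSr.
apply: memvD; apply: memvD.
- exact: (subvP HAs _ (HA _ _ Ha Ha')).
- exact: H.
- by rewrite brN memvN H.
- exact: (subvP HBs _ (HB _ _ Hb Hb')).
Qed.

Lemma subalg_line x : is_subalg br <[x]>%VS.
Proof.
move=> u v /vlineP [a ->] /vlineP [b ->].
rewrite brZl (brN (b *: x)) brZl.
case: Hlie => _ _ Ha _; by rewrite Ha scaler0 oppr0 scaler0 mem0v.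
Qed.


Lemma gen_stepS (S : {vspace L}) : (S <= gen_step br S)%VS.
Proof. exact: addvSl. Qed.

Lemma iter_ge (S : {vspace L}) k : (S <= iter k (gen_step br) S)%VS.
Proof.
elim: k => [|k IH] /=; first exact: subvv.
exact: subv_trans IH (gen_stepS _).
Qed.

Lemma iter_min (S T : {vspace L}) k : is_subalg br T -> (S <= T)%VS ->
  (iter k (gen_step br) S <= T)%VS.
Proof.
move=> /subalgP HT HS; elim: k => [|k IH] //=.
rewrite /gen_step subv_add IH /=.
exact: subv_trans (lie_prodS IH IH) HT.
Qed.

Lemma iter_fix (S : {vspace L}) k :
  (k <= \dim (iter k (gen_step br) S))%N ||
  (gen_step br (iter k (gen_step br) S) == iter k (gen_step br) S).
Proof.
elim: k => [|k IH] //=.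
set g := iter k (gen_step br) S in IH *.
case E: (gen_step br g == g).
  by rewrite (eqP E) E orbT.
move: IH; rewrite E orbF => IH.
have := dimv_leqif_eq (gen_stepS g).
move/ltn_leqif; rewrite eq_sym E /= => H.
by rewrite (leq_ltn_trans IH H).
Qed.

Lemma gen_fix (S : {vspace L}) :
  gen_step br (gen_subalg br S) = gen_subalg br S.
Proof.
rewrite /gen_subalg; set n := \dim _.
case/orP: (iter_fix S n) => [H|/eqP //].
have Hf : iter n (gen_step br) S = fullv.
  by apply/eqP; rewrite eqEdim subvf H.
by rewrite Hf; apply/subv_anti; rewrite subvf gen_stepS.
Qed.

Lemma gen_subalgP (S : {vspace L}) : is_subalg br (gen_subalg br S).
Proof.
apply/subalgP; have := gen_fix S; rewrite /gen_step => /addv_idPl //.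
Qed.

Lemma gen_ge (S : {vspace L}) : (S <= gen_subalg br S)%VS.
Proof. exact: iter_ge. Qed.

Lemma gen_min (S T : {vspace L}) : is_subalg br T -> (S <= T)%VS ->
  (gen_subalg br S <= T)%VS.
Proof. exact: iter_min. Qed.

Lemma gen_id (S : {vspace L}) : is_subalg br S -> gen_subalg br S = S.
Proof. by move=> HS; apply/subv_anti; rewrite gen_ge gen_min ?subvv. Qed.


Lemma gen2_subalg (U B : {vspace L}) : is_subalg br (gen2 br U B).
Proof. exact: gen_subalgP. Qed.
Lemma gen2_geU (U B : {vspace L}) : (U <= gen2 br U B)%VS.
Proof. exact: subv_trans (addvSl U B) (gen_ge _). Qed.
Lemma gen2_geB (U B : {vspace L}) : (B <= gen2 br U B)%VS.
Proof. exact: subv_trans (addvSr U B) (gen_ge _). Qed.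
Lemma gen2_min (U B T : {vspace L}) : is_subalg br T -> (U <= T)%VS -> (B <= T)%VS ->
  (gen2 br U B <= T)%VS.
Proof. by move=> HT HU HB; apply: gen_min => //; rewrite subv_add HU HB. Qed.

Lemma br0l y : br 0 y = 0.
Proof. exact: (lin0 (brlin_l y)). Qed.

Lemma subalg0 : is_subalg br 0%VS.
Proof.
move=> x y; rewrite !memv0 => /eqP -> _.
by rewrite br0l.
Qed.

Lemma mod_um (U : {vspace L}) : is_subalg br U -> modular br U -> upper_modular br U.
Proof.
move=> HU [M1 M2] B HB [_ _ HUB HneB Hmax]; split.
- exact: gen2_subalg.
- exact: HU.
- exact: gen2_geU.
- apply/eqP => E; move/eqP: HneB; apply; apply/capv_idPr.
  by rewrite E gen2_geB.
- move=> C HC HUC HCG; have := M2 B C HB HC HUC.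
  rewrite (capv_idPr HCG) => ->.
  have HUBC : (U :&: B <= B :&: C)%VS.
    by rewrite subv_cap capvSr (subv_trans (capvSl U B) HUC).
  have [H1|H2] := Hmax (B :&: C)%VS (subalg_cap HB HC) HUBC (capvSl B C).
    left; rewrite H1 /gen2.
    by rewrite (addv_idPr (capvSl U B)) gen_id.
  by right; rewrite H2 /gen2 addvC.
Qed.

Lemma mod_lm (U : {vspace L}) : is_subalg br U -> modular br U -> lower_modular br U.
Proof.
move=> HU [M1 M2] B HB [HG _ HUG HneG Hmax]; split.
- exact: HB.
- exact: subalg_cap.
- exact: capvSr.
- apply/eqP => E; move/eqP: HneG; apply.
  move/capv_idPr: E => HBU.
  by rewrite /gen2 (addv_idPl HBU) gen_id.
- move=> C HC HUC HCB; have := M1 C B HC HB HCB.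
  rewrite /gen2 [(C + _)%VS](addv_idPl HUC) (gen_id HC) => E.
  have HG2 : (gen2 br U C <= gen2 br U B)%VS.
    by apply: gen2_min => //; apply: subv_trans HCB (gen2_geB _ _).
  have [H1|H2] := Hmax (gen2 br U C) (@gen2_subalg U C) (gen2_geU _ _) HG2.
    by left; rewrite -E /gen2 -/(gen2 br U C) H1.
  by right; rewrite -E /gen2 -/(gen2 br U C) H2 (capv_idPr (gen2_geB _ _)).
Qed.

Lemma modlaw (A B C : {vspace L}) : (A <= C)%VS -> ((A + B) :&: C = A + (B :&: C))%VS.
Proof.
move=> HAC; apply/subv_anti/andP; split.
  apply/subvP => x; rewrite memv_cap => /andP [/memv_addP [a Ha [b Hb ->]] HxC].
  apply: memv_add => //; rewrite memv_cap Hb /=.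
  have -> : b = (a + b) - a by rewrite addrC addKr.
  by rewrite memvB // (subvP HAC).
by rewrite subv_cap (addvS (subvv A) (capvSl B C)) subv_add HAC capvSr.
Qed.

Lemma quasi_sum (Q B : {vspace L}) : quasi_ideal br Q -> is_subalg br B ->
  is_subalg br (Q + B)%VS.
Proof.
move=> [HQ HQV] HB; apply: subalg_sum => // a b Ha Hb.
exact: (subvP (HQV B)) (mem_lie_prod Ha Hb).
Qed.

Lemma quasi_mod (Q : {vspace L}) : quasi_ideal br Q -> modular br Q.
Proof.
move=> HQ; have [HQs HQV] := HQ; split.
- move=> B C HB HC HBC.
  rewrite /gen2 (gen_id (quasi_sum HQ HB)) addvC modlaw //.
  apply/esym/gen_id; apply: subalg_sum => //; first exact: subalg_cap.
  move=> b q Hb; rewrite memv_cap => /andP [Hq HqC].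
  rewrite brN memvN -modlaw // addvC memv_cap.
  rewrite (subvP (HQV B)) ?mem_lie_prod //=.
  by apply: HC => //; apply: (subvP HBC).
- move=> B C HB HC HQC.
  rewrite /gen2 (gen_id (quasi_sum HQ HB)) modlaw // addvC.
  by rewrite gen_id // addvC; apply: quasi_sum => //; apply: subalg_cap.
Qed.


Lemma cap_line0 (A : {vspace L}) y : y \notin A -> (A :&: <[y]> = 0)%VS.
Proof.
move=> Hy; apply/eqP; rewrite -dimv_eq0.
have : (\dim (A :&: <[y]>) <= \dim <[y]>)%N by apply: dimvS; apply: capvSr.
rewrite dim_vline; case: (y != 0) => /=; last by rewrite leqn0.
rewrite leq_eqVlt ltnS leqn0 => /orP [H|//].
have E : (A :&: <[y]> == <[y]>)%VS by rewrite eqEdim capvSr dim_vline (eqP H) leq_b1.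
by move: Hy; rewrite memvE -(eqP E) capvSl.
Qed.

Lemma dim_addline (A : {vspace L}) y : y \notin A -> \dim (A + <[y]>) = (\dim A).+1.
Proof.
move=> Hy; have := dimv_sum_cap A <[y]>; rewrite cap_line0 // dimv0 addn0 dim_vline.
have -> : (y != 0) by apply: contraNneq Hy => ->; rewrite mem0v.
by rewrite addn1.
Qed.

Lemma find_step (P : nat -> bool) n : ~~ P 0 -> P n -> exists i, ~~ P i /\ P i.+1.
Proof.
elim: n => [|n IH] H0 Hn; first by rewrite Hn in H0.
case E: (P n); first exact: IH.
by exists n; rewrite E.
Qed.

Definition Dser (M : {vspace L}) i := iter i (fun S => lie_prod br S S) M.

Lemma Dser_ideal (M : {vspace L}) : is_subalg br M -> forall i,
  (Dser M i <= M)%VS /\ (forall m d, m \in M -> d \in Dser M i -> br m d \in Dser M i).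
Proof.
move=> HM; elim=> [|i [IH1 IH2]]; first by split; [exact: subvv | exact: HM].
have Hsub : (Dser M i.+1 <= Dser M i)%VS.
  apply: lie_prodP => a b Ha Hb; apply: IH2 => //; exact: (subvP IH1).
split; first exact: subv_trans Hsub IH1.
move=> m d Hm Hd; apply: (lin_span (f := br m) (brlin_r m)) Hd => z.
case/allpairsP => [[a b] /= [Ha Hb ->]].
have {}Ha := vbasis_mem Ha; have {}Hb := vbasis_mem Hb.
rewrite brJ memvD // memvN.
  by apply: mem_lie_prod => //; rewrite brN memvN IH2.
by apply: mem_lie_prod => //; apply: IH2.
Qed.

Lemma Dser_derived (M : {vspace L}) i : (Dser M i <= derived br i)%VS.
Proof.
elim: i => [|i IH] /=; first exact: subvf.
exact: lie_prodS.
Qed.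


Lemma sm_key (U : {vspace L}) x u : lie_solvable br -> is_subalg br U ->
  semi_modular br U -> x \notin U -> u \in U -> br u x \in (U + <[x]>)%VS.
Proof.
move=> [n Hn] HU [Hum Hlm] HxU Hu.
set M := gen2 br U <[x]>.
have Hx0 : x != 0 by apply: contraNneq HxU => ->; rewrite mem0v.
have HcovL : covers br <[x]> (U :&: <[x]>).
  rewrite cap_line0 //; split.
  - exact: subalg_line.
  - exact: subalg0.
  - exact: sub0v.
  - by rewrite eq_sym -dimv_eq0 dim_vline Hx0.
  - move=> C _ _ HC; have := dimvS HC; rewrite dim_vline Hx0.
    rewrite leq_eqVlt ltnS leqn0 => /orP [H|H].
      by right; apply/eqP; rewrite eqEdim HC dim_vline Hx0 (eqP H).
    by left; apply/eqP; rewrite -dimv_eq0.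
have [HMs _ HUM HneM Hmax] := Hum _ (@subalg_line x) HcovL.
have HxM : x \in M by apply: (subvP (gen2_geB _ _)); apply: memv_line.
have P0 : ~~ (Dser M 0 <= U)%VS by apply/subvPn; exists x.
have Pn : (Dser M n <= U)%VS.
  by apply: subv_trans (Dser_derived M n) _; rewrite Hn sub0v.
have [i [Hi Hi1]] := find_step (P := fun i => (Dser M i <= U)%VS) P0 Pn.
set D := Dser M i in Hi Hi1.
have [HDM HDid] := Dser_ideal HMs i.
rewrite -/D in HDM HDid.
have HDD : (lie_prod br D D <= D)%VS.
  by apply: lie_prodP => a b Ha Hb; apply: HDid => //; apply: (subvP HDM).
have HDs : is_subalg br D by apply/subalgP.
have HUDs : is_subalg br (U + D)%VS.
  apply: subalg_sum => // a b Ha Hb.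
  by apply: (subvP (addvSr U D)); apply: HDid => //; apply: (subvP HUM).
have HUD : (U + D)%VS = M.
  have HUDM : (U + D <= M)%VS by rewrite subv_add HUM HDM.
  have [E|//] := Hmax _ HUDs (addvSl U D) HUDM.
  have HDU : (D <= U)%VS by rewrite -E addvSr.
  by rewrite HDU in Hi.
have HcovD : covers br D (U :&: D).
  apply: Hlm => //; rewrite /gen2 gen_id // HUD.
  by split.
have [_ _ _ HneD HmaxD] := HcovD.
have : ~~ (D <= U :&: D)%VS.
  apply: contra HneD => H; apply/eqP/subv_anti; rewrite H capvSr //.
case/subvPn => y HyD HyUD.
have HCs : is_subalg br (U :&: D + <[y]>)%VS.
  move=> a b Ha Hb; apply: (subvP (addvSl _ _)).
  have HCD : (U :&: D + <[y]> <= D)%VS by rewrite subv_add capvSr -memvE.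
  have Hab : br a b \in lie_prod br D D.
    by apply: mem_lie_prod; apply: (subvP HCD).
  by rewrite memv_cap (subvP Hi1) // (subvP HDD).
have HCD : (U :&: D + <[y]> <= D)%VS by rewrite subv_add capvSr -memvE.
have [E|E] := HmaxD _ HCs (addvSl _ _) HCD.
  by move: HyUD; rewrite -E memvE addvSr.
have HdimD : \dim D = (\dim (U :&: D)).+1 by rewrite -{1}E dim_addline.
have HdimM : \dim M = (\dim U).+1.
  have := dimv_sum_cap U D; rewrite HUD HdimD addnS => /eqP.
  by rewrite -addSn eqn_add2r => /eqP.
have HUx : (U + <[x]>)%VS = M.
  apply/eqP; rewrite eqEdim HdimM dim_addline // leqnn andbT.
  exact: gen_ge.
rewrite HUx; apply: HMs => //; exact: (subvP HUM).
Qed.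

Lemma sm_quasi (U : {vspace L}) : lie_solvable br -> is_subalg br U ->
  semi_modular br U -> quasi_ideal br U.
Proof.
move=> Hs HU Hsm; split => // V; apply: lie_prodP => u v Hu Hv.
case E: (v \in U).
  by apply: (subvP (addvSl U V)); apply: HU.
apply: (subvP (addvS (subvv U) _)) (sm_key Hs HU Hsm (negbT E) Hu).
by rewrite -memvE.
Qed.

End Br.

Theorem theorem2p3 (F : fieldType) (L : vectType F) (br : L -> L -> L)
  (Hlie : is_lie_bracket br) (Hsolv : lie_solvable br)
  (U : {vspace L}) (HU : is_subalg br U) (Hproper : U != fullv%VS) :
  [<-> modular br U; semi_modular br U; quasi_ideal br U].
Proof.
tfae.
- by move=> H; split; [apply: mod_um | apply: mod_lm].
- exact: sm_quasi.
- exact: quasi_mod.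
Qed.
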